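(* Let $f:\mathbb{R}^n\to\mathbb{R}$ be continuously differentiable, and let $t\mapsto w^t\in\mathbb{R}^n$ be continuously differentiable in $t$ and satisfy the Cauchy-Simplex gradient flow $$\frac{dw^t}{dt} = -\beta\, w^t\odot\Big(\nabla f(w^t) - \big(w^t\cdot\nabla f(w^t)\big)\mathbb{1}\Big)$$ for a constant $\beta>0$. Then, as long as $w^t\in\operatorname{int}(\Delta^n)$ (i.e. $\sum_i w^t_i=1$ and $w^t_i>0$ for all $i$), $t\mapsto f(w^t)$ is a decreasing (non-increasing) function of time; more precisely $\frac{d}{dt}f(w^t)\le 0$.
   Context: $\Delta^n=\{w\in\mathbb{R}^n : \sum_i w_i=1,\ w_i\ge 0\}$ is the probability simplex and $\operatorname{int}(\Delta^n)$ denotes the points of $\Delta^n$ with all coordinates strictly positive. $\odot$ denotes componentwise multiplication, $\mathbb{1}$ the all-ones vector, and $\nabla f$ the gradient of $f$ with respect to $w$. *)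

(* Defs.v *)
From HB Require Import structures.
From mathcomp Require Import all_boot all_order all_algebra.
From mathcomp Require Import all_classical all_reals all_analysis.
Set Implicit Arguments. Unset Strict Implicit. Unset Printing Implicit Defensive.
Import Order.TTheory GRing.Theory Num.Theory.
Import numFieldNormedType.Exports.
Local Open Scope ring_scope.

(* Vectors of R^n are row vectors 'rV[R]_n; coordinate i of w is w 0 i. *)

Definition basis_vec {R : realType} {n : nat} (i : 'I_n) : 'rV[R]_n :=
  delta_mx 0 i.

Definition grad {R : realType} {n : nat} (f : 'rV[R]_n -> R) (x : 'rV[R]_n)
  : 'rV[R]_n := \row_i ('D_(basis_vec i) f x).

Definition hadamard {R : realType} {n : nat} (u v : 'rV[R]_n) : 'rV[R]_n :=
  \row_i (u 0 i * v 0 i).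

Definition dotv {R : realType} {n : nat} (u v : 'rV[R]_n) : R :=
  \sum_(i < n) u 0 i * v 0 i.

Definition ones {R : realType} {n : nat} : 'rV[R]_n := const_mx 1.

Definition in_int_simplex {R : realType} {n : nat} (w : 'rV[R]_n) : Prop :=
  \sum_(i < n) w 0 i = 1 /\ (forall i : 'I_n, 0 < w 0 i).

Definition C1_field {R : realType} {n : nat} (f : 'rV[R]_n -> R) : Prop :=
  (forall x, differentiable f x) /\
  (forall i : 'I_n, continuous (fun x => 'D_(basis_vec i) f x)).

Definition C1_curve {R : realType} {n : nat} (w : R -> 'rV[R]_n) : Prop :=
  (forall t, derivable w t 1) /\ continuous (derive1 w).

Definition cs_field {R : realType} {n : nat} (beta : R) (f : 'rV[R]_n -> R)
  (w : 'rV[R]_n) : 'rV[R]_n :=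
  - (beta *: hadamard w (grad f w - dotv w (grad f w) *: ones)).

(* Main.v *)
Require Import Defs.
From HB Require Import structures.
From mathcomp Require Import all_boot all_order all_algebra.
From mathcomp Require Import all_classical all_reals all_analysis.
From mathcomp Require Import ring lra.
Import Order.TTheory GRing.Theory Num.Theory.
Import numFieldNormedType.Exports.
Local Open Scope ring_scope.
Local Open Scope classical_set_scope.

Lemma var_ge0 (R : realType) (n : nat) (w g : 'rV[R]_n) :
  in_int_simplex w ->
  0 <= \sum_(i < n) g 0 i * (w 0 i * (g 0 i - dotv w g)).
Proof.
move=> [sw pw]; set s := dotv w g.
have -> : \sum_(i < n) g 0 i * (w 0 i * (g 0 i - s)) =
  \sum_(i < n) w 0 i * (g 0 i - s) ^+ 2 + s * \sum_(i < n) w 0 i * (g 0 i - s).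
  rewrite mulr_sumr -big_split /=; apply: eq_bigr => i _; ring.
have -> : \sum_(i < n) w 0 i * (g 0 i - s) = 0.
  under eq_bigr do rewrite mulrBr.
  rewrite sumrB -mulr_suml sw mul1r /s /dotv subrr //.
rewrite mulr0 addr0; apply: sumr_ge0 => i _.
by rewrite mulr_ge0 ?sqr_ge0 // ltW.
Qed.

Theorem theorem4p1 (R : realType) (n : nat) (beta : R)
    (f : 'rV[R]_n -> R) (w : R -> 'rV[R]_n) :
  0 < beta ->
  C1_field f ->
  C1_curve w ->
  (forall t, derive1 w t = cs_field beta f (w t)) ->
  (* pointwise: d/dt f(w^t) exists and is <= 0 whenever w^t ∈ int(Δ^n) *)
  (forall t, in_int_simplex (w t) ->
     derivable (f \o w) t 1 /\ derive1 (f \o w) t <= 0) /\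
  (* hence f(w^t) is non-increasing on any time interval where w^t stays in int(Δ^n) *)
  (forall a b : R, a <= b ->
     (forall t, a <= t <= b -> in_int_simplex (w t)) ->
     f (w b) <= f (w a)).
Proof.
move=> bpos [df _] [dw _] hw.
have dfw : forall t, differentiable (f \o w) t.
  move=> t; apply: differentiable_comp => //; exact/derivable1_diffP.
have dfw' : forall t, derivable (f \o w) t 1.
  by move=> t; apply/derivable1_diffP.
have key : forall t, in_int_simplex (w t) -> derive1 (f \o w) t <= 0.
  move=> t ht.
  have dwt : differentiable w t by exact/derivable1_diffP.
  rewrite derive1E' // diff_comp //= -derive1E' // hw.
  set v := cs_field beta f (w t).
  rewrite [v]row_sum_delta linear_sum /=.
  have -> : \sum_(j < n) 'd f (w t) (v 0 j *: delta_mx 0 j) =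
     - beta * \sum_(i < n) (grad f (w t)) 0 i * (w t 0 i *
        ((grad f (w t)) 0 i - dotv (w t) (grad f (w t)))).
    rewrite mulr_sumr; apply: eq_bigr => j _.
    rewrite linearZ /= -deriveE // -/(basis_vec j).
    rewrite /v /cs_field /hadamard /grad /ones.
    have oppE (A : 'rV[R]_n) k : (- A) 0 k = - A 0 k by rewrite !mxE.
    have sclE (c : R) (A : 'rV[R]_n) k : (c *: A) 0 k = c * A 0 k by rewrite !mxE.
    have subE (A B : 'rV[R]_n) k : (A - B) 0 k = A 0 k - B 0 k by rewrite !mxE.
    rewrite oppE sclE !mxE mulr1.
    set a := 'D_(basis_vec j) f (w t); set d := dotv _ _.
    rewrite [LHS]/GRing.scale /=.
    ring.
  rewrite mulNr oppr_le0; apply: mulr_ge0; [exact: ltW | exact: var_ge0].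
split; first by move=> t ht; split; [exact: dfw'|exact: key].
move=> a b ab hab.
apply: (@ler0_derive1_nincr R (f \o w) a b) => //.
- move=> x; rewrite in_itv /= => /andP[ax xb]; apply: key; apply: hab.
  by rewrite !ltW.
- apply: continuous_subspaceT => x.
  exact: differentiable_continuous.
Qed.
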